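(* For $x,y\ge 1$ with $x\ne y$ and $n>\max(x,y)$, the $(x,y)$ edge-addition process on $n$ vertices does not necessarily result in an $(x,y)$ task-dependency graph; that is, with positive probability its result is not an $(x,y)$ task-dependency graph.
   Context: A task-dependency graph is a finite directed acyclic graph (no loops, no multiple edges). A vertex is initial if it has in-degree $0$ and terminal if it has out-degree $0$ (an isolated vertex is both). An $(x,y)$ task-dependency graph has exactly $x$ initial and exactly $y$ terminal vertices. The $(x,y)$ edge-addition process on $n$ vertices: start with the empty graph on $\{1,\dots,n\}$ and repeatedly add, uniformly at random, an edge $(a,b)$ with $a<b$ not yet present; if an addition would cause fewer than $x$ initial vertices or fewer than $y$ terminal vertices, it is cancelled. The process halts if the graph after some edge addition is an $(x,y)$ task-dependency graph, or if no more edges can be added; the result is the final graph. *)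

(* Defs.v *)
From mathcomp Require Import all_boot all_order all_algebra.
Set Implicit Arguments. Unset Strict Implicit. Unset Printing Implicit Defensive.
Import GRing.Theory Num.Theory.

(* A graph on the vertex set 'I_n (= {1,..,n} shifted to {0,..,n-1}) is given by
   its set of directed edges; the edge-addition process only ever adds edges
   (a,b) with a < b, so every graph it produces is a DAG without loops or
   multiple edges. *)
Definition graph (n : nat) := {set 'I_n * 'I_n}.

Definition initials n (E : graph n) : {set 'I_n} :=
  [set v : 'I_n | [forall u : 'I_n, (u, v) \notin E]].

Definition terminals n (E : graph n) : {set 'I_n} :=
  [set v : 'I_n | [forall w : 'I_n, (v, w) \notin E]].

Definition is_tdg (x y n : nat) (E : graph n) : bool :=
  (#|initials E| == x) && (#|terminals E| == y).

(* edges (a,b), a<b, not yet present, whose addition is NOT cancelled *)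
Definition addable (x y n : nat) (E : graph n) : {set 'I_n * 'I_n} :=
  [set e : 'I_n * 'I_n | [&& (e.1 < e.2)%N, e \notin E,
                             (x <= #|initials (e |: E)|)%N &
                             (y <= #|terminals (e |: E)|)%N]].

(* Probability that the (x,y) edge-addition process, started from the current
   graph E (reached after some addition) with [fuel] steps of budget, ends in a
   graph that is NOT an (x,y) task-dependency graph.
   A uniformly chosen non-present edge that gets cancelled leaves the state
   unchanged; hence the next successful addition is uniform among the
   [addable] edges, and the process halts exactly when [addable] is empty
   (no more edges can be added) or right after an addition producing an
   (x,y) task-dependency graph. *)
Fixpoint prob_bad (x y n : nat) (fuel : nat) (E : graph n) : rat :=
  let A := addable x y E in
  match fuel with
  | 0 => if is_tdg x y E then 0 else 1
  | k.+1 =>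
      if A == set0 then (if is_tdg x y E then 0 else 1)
      else \sum_(e in A)
             (#|A|%:R)^-1 * (if is_tdg x y (e |: E) then 0
                             else prob_bad x y k (e |: E))
  end%R.

(* The process on n vertices starts from the empty graph; at most n*n edges
   can ever be added, so the fuel n*n is never exhausted prematurely. *)
Definition process_bad_prob (x y n : nat) : rat :=
  prob_bad x y (n * n) (set0 : graph n).

(* Main.v *)
Require Import Defs.
From mathcomp Require Import all_boot all_order all_algebra.
From mathcomp Require Import zify.
Import GRing.Theory Num.Theory.
Set Warnings "-all".
Set Implicit Arguments.

Lemma initials_sub n (E G : graph n) : E \subset G -> initials G \subset initials E.
Proof.
move=> sEG; apply/subsetP => v; rewrite !inE => /forallP H; apply/forallP => u.
apply/negP => uv; by move: (H u); rewrite (subsetP sEG _ uv).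
Qed.

Lemma terminals_sub n (E G : graph n) : E \subset G -> terminals G \subset terminals E.
Proof.
move=> sEG; apply/subsetP => v; rewrite !inE => /forallP H; apply/forallP => u.
apply/negP => uv; by move: (H u); rewrite (subsetP sEG _ uv).
Qed.

Lemma initialsU n (e : 'I_n * 'I_n) (E : graph n) : initials (e |: E) = initials E :\ e.2.
Proof.
apply/setP => v; rewrite !inE; apply/forallP/andP.
- move=> H; split.
  + apply/negP => /eqP ev; move: (H e.1); rewrite ev -surjective_pairing !inE eqxx //.
  + apply/forallP => u; move: (H u); rewrite !inE negb_or; by case/andP.
- case=> ne /forallP H u; rewrite !inE negb_or H andbT.
  apply/negP => /eqP h; by move: ne; rewrite -h /= eqxx.
Qed.

Lemma terminalsU n (e : 'I_n * 'I_n) (E : graph n) : terminals (e |: E) = terminals E :\ e.1.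
Proof.
apply/setP => v; rewrite !inE; apply/forallP/andP.
- move=> H; split.
  + apply/negP => /eqP ev; move: (H e.2); rewrite ev -surjective_pairing !inE eqxx //.
  + apply/forallP => u; move: (H u); rewrite !inE negb_or; by case/andP.
- case=> ne /forallP H u; rewrite !inE negb_or H andbT.
  apply/negP => /eqP h; by move: ne; rewrite -h /= eqxx.
Qed.

Lemma prob_bad_ge0 x y n k (E : graph n) : (0 <= prob_bad x y k E)%R.
Proof.
elim: k E => [|k IH] E /=; first by case: is_tdg.
case: ifP => _; first by case: is_tdg.
apply: sumr_ge0 => e _; apply: mulr_ge0; first by rewrite invr_ge0 ler0n.
by case: is_tdg.
Qed.

Lemma key x y n (F : graph n) :
  (forall e, e \in F -> e.1 < e.2)%N ->
  (x <= #|initials F|)%N -> (y <= #|terminals F|)%N ->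
  (x < #|initials F|)%N || (y < #|terminals F|)%N ->
  addable x y F = set0 ->
  forall k (E : graph n), E \subset F -> (#|F :\: E| <= k)%N ->
  (0 < prob_bad x y k E)%R.
Proof.
move=> hF hxi hyt hbad hA.
have ntdg : forall G : graph n, G \subset F -> is_tdg x y G = false.
  move=> G sGF; rewrite /is_tdg.
  move: (subset_leq_card (initials_sub sGF)) (subset_leq_card (terminals_sub sGF)).
  move: hbad; case/orP => h1 h2 h3; apply/negbTE/negP => /andP[/eqP a /eqP b]; lia.
elim=> [|k IH] E sEF hk.
- have -> : E = F.
    apply/eqP; rewrite eqEsubset sEF /=; rewrite leqn0 cards_eq0 in hk.
    apply/subsetP => z zF; apply/negPn/negP => zE.
    by move: hk => /eqP /setP /(_ z); rewrite !inE zE zF.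
  by rewrite /= ntdg.
- have [EF|] := eqVneq E F.
    by rewrite EF /= hA eqxx ntdg.
  move=> nEF.
  have [e eFE] : exists e, e \in F :\: E.
    apply/set0Pn; rewrite setD_eq0; apply/negP => sFE; apply/eqP: nEF.
    by rewrite eqEsubset sEF sFE.
  move: (eFE); rewrite inE => /andP[eE eF].
  have sEF' : e |: E \subset F by rewrite subUset sub1set eF sEF.
  have eA : e \in addable x y E.
    rewrite inE hF // eE /=.
    rewrite (leq_trans hxi (subset_leq_card (initials_sub sEF'))).
    by rewrite (leq_trans hyt (subset_leq_card (terminals_sub sEF'))).
  have nA : addable x y E != set0 by apply/set0Pn; exists e.
  rewrite /= (negbTE nA) (bigD1 e) //= ntdg //.
  apply: ltr_wpDr; first by apply: sumr_ge0 => i _; apply: mulr_ge0;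
     [rewrite invr_ge0 ler0n | case: is_tdg; rewrite // prob_bad_ge0].
  apply: mulr_gt0; first by rewrite invr_gt0 ltr0n card_gt0.
  apply: IH => //.
  move: hk; rewrite (cardsD1 e (F :\: E)) eFE setDDl setUC.
  by rewrite add1n ltnS.
Qed.
Lemma card_predn n (P : pred nat) : #|[set v : 'I_n | P v]| = count P (iota 0 n).
Proof.
rewrite cardE -val_enum_ord count_map size_filter /enum_mem /=.
rewrite count_filter; apply: eq_count => v /=; by rewrite inE andbT.
Qed.

Lemma count_two a b n : (a <= b)%N ->
  count (fun v => (v < a) || (b <= v))%N (iota 0 n) = (minn a n + (n - b))%N.
Proof.
move=> ab; elim: n => [|n IH]; first by rewrite /= minn0.
rewrite -addn1 iotaD count_cat IH /= add0n addn0.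
case: (ltnP n a) => h1; case: (leqP b n) => h2 /=; lia.
Qed.
Lemma case_yx x y n : (1 <= y)%N -> (y < x)%N -> (x < n)%N -> (0 < process_bad_prob x y n)%R.
Proof.
move=> y1 yx xn.
pose F : graph n := [set e : 'I_n * 'I_n | (e.1 < e.2)%N && (e.2 <= n - x)%N].
have n0 : (0 < n)%N by lia.
have hI : initials F = [set v : 'I_n | (v < 1)%N || (n - x + 1 <= v)%N].
  apply/setP => v; rewrite !inE; apply/forallP/idP => [H|H u].
  - case: (boolP ((v < 1) || (n - x + 1 <= v))%N) => // hv; exfalso.
    have := H (Ordinal n0); rewrite inE /=; lia.
  - rewrite inE /=; lia.
have hT : terminals F = [set v : 'I_n | (v < 0)%N || (n - x <= v)%N].
  apply/setP => v; rewrite !inE; apply/forallP/idP => [H|H u].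
  - case: (boolP ((v < 0) || (n - x <= v))%N) => // hv; exfalso.
    have w : (v.+1 < n)%N by lia.
    have := H (Ordinal w); rewrite inE /=; lia.
  - rewrite inE /=; lia.
have cI : #|initials F| = x by rewrite hI (card_predn n (fun v => (v < 1) || (n - x + 1 <= v))%N) count_two; lia.
have cT : #|terminals F| = x by rewrite hT (card_predn n (fun v => (v < 0) || (n - x <= v))%N) count_two; lia.
have := @key x y n F.
rewrite cI cT leqnn ltnW // yx orbT.
move=> /(_ _ _ _ _ _ (n * n) set0) H; apply: H => //.
- by move=> e; rewrite inE => /andP[].
- apply/setP => e; rewrite !inE; apply/negbTE.
  apply/negP => /and4P[h1 h2 h3 _].
  have h4 : (n - x < e.2)%N by move: h2; rewrite h1 /=; lia.
  have h5 : e.2 \in initials F by rewrite hI inE; lia.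
  move: h3; rewrite initialsU; have := cardsD1 e.2 (initials F); rewrite h5 cI /= => ->; by rewrite add1n ltnn.
- by rewrite sub0set.
- rewrite setD0; apply: leq_trans (max_card _) _; by rewrite card_prod card_ord.
Qed.

Lemma case_xy x y n : (1 <= x)%N -> (x < y)%N -> (y < n)%N -> (0 < process_bad_prob x y n)%R.
Proof.
move=> x1 xy yn.
pose F : graph n := [set e : 'I_n * 'I_n | (e.1 < e.2)%N && ((y - 1) <= e.1)%N].
have n0 : ((y - 1) < n)%N by lia.
have hI : initials F = [set v : 'I_n | (v < y)%N || (n <= v)%N].
  apply/setP => v; rewrite !inE; apply/forallP/idP => [H|H u].
  - case: (boolP ((v < y) || (n <= v))%N) => // hv; exfalso.
    have := H (Ordinal n0); rewrite inE /=; lia.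
  - rewrite inE /=; have := ltn_ord v; lia.
have hT : terminals F = [set v : 'I_n | (v < (y - 1))%N || ((n - 1) <= v)%N].
  apply/setP => v; rewrite !inE; apply/forallP/idP => [H|H u].
  - case: (boolP ((v < (y - 1)) || ((n - 1) <= v))%N) => // hv; exfalso.
    have w : (v.+1 < n)%N by lia.
    have := H (Ordinal w); rewrite inE /=; lia.
  - rewrite inE /=; have := ltn_ord u; have := ltn_ord v; lia.
have cI : #|initials F| = y.
  by rewrite hI (card_predn n (fun v => (v < y) || (n <= v))%N) count_two; lia.
have cT : #|terminals F| = y.
  by rewrite hT (card_predn n (fun v => (v < (y - 1)) || ((n - 1) <= v))%N) count_two; lia.
have := @key x y n F.
rewrite cI cT leqnn ltnW // xy.
move=> /(_ _ _ _ _ _ (n * n) set0) H; apply: H => //.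
- by move=> e; rewrite inE => /andP[].
- apply/setP => e; rewrite !inE; apply/negbTE.
  apply/negP => /and4P[h1 h2 _ h3].
  have h4 : (e.1 < (y - 1))%N by move: h2; rewrite h1 /=; lia.
  have h5 : e.1 \in terminals F by rewrite hT inE; lia.
  move: h3; rewrite terminalsU; have := cardsD1 e.1 (terminals F); rewrite h5 cT /= => ->; by rewrite add1n ltnn.
- by rewrite sub0set.
- rewrite setD0; apply: leq_trans (max_card _) _; by rewrite card_prod card_ord.
Qed.

Theorem mainTheorem9 (x y n : nat) :
  (1 <= x)%N -> (1 <= y)%N -> x <> y -> (maxn x y < n)%N ->
  (0 < process_bad_prob x y n)%R.
Proof.
move=> x1 y1 nxy hn.
case: (ltngtP x y) => h.
- apply: case_xy => //; lia.
- apply: case_yx => //; lia.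
- by [].
Qed.
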